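(* Let $H_1,\dots,H_n$ be null hypotheses with $p$-values $PV_1,\dots,PV_n\in[0,1]$ that may have an arbitrary joint dependence structure. Let $I\subseteq\{1,\dots,n\}$ be the set of true null hypotheses, and for each $i$ let $F_i$ be the null distribution function of $PV_i$ (so that $P(PV_j\le x)=F_j(x)$ for $j\in I$), satisfying $F_i(u)\le u$ for all $u\in(0,1)$. Let $G(x)=\sum_{i=1}^n F_i(x)$ for $x\in[0,1]$. Then for every sequence of critical values $0\le c_1\le c_2\le\cdots\le c_n\le 1$, setting $c_0=0$, the step-up procedure with critical values $c$ satisfies $$\mathrm{FDR}(c)\le \sum_{r=1}^n\sum_{j\in I}\frac{1}{r}\bigl(F_j(c_r)-F_j(c_{r-1})\bigr)\le \sum_{r=1}^n\frac{1}{r}\bigl(G(c_r)-G(c_{r-1})\bigr).$$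
   Context: Step-up procedure with critical values $c_1\le\cdots\le c_n$: let $PV_{(1)}\le\cdots\le PV_{(n)}$ be the ordered $p$-values with corresponding hypotheses $H_{(1)},\dots,H_{(n)}$; let $k=\max\{i: PV_{(i)}\le c_i\}$ and reject $H_{(1)},\dots,H_{(k)}$; if no such $i$ exists, reject nothing. With $R$ the number of rejections and $V$ the number of rejected true null hypotheses, $\mathrm{FDR}(c)=E[V/\max(R,1)]$. *)

(* Defs.v *)
From Stdlib Require Import Reals.
From mathcomp Require Import ssreflect ssrfun ssrbool eqtype ssrnat seq path.

Set Implicit Arguments.
Unset Strict Implicit.

Local Open Scope R_scope.

Record prob_space (Omega : Type) := ProbSpace {
  measurable : (Omega -> Prop) -> Prop;
  prob : (Omega -> Prop) -> R;
  meas_full : measurable (fun _ => True);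
  meas_compl : forall A, measurable A -> measurable (fun w => ~ A w);
  meas_union : forall A : nat -> Omega -> Prop,
      (forall k, measurable (A k)) -> measurable (fun w => exists k, A k w);
  prob_nonneg : forall A, measurable A -> 0 <= prob A;
  prob_full : prob (fun _ => True) = 1;
  prob_sigma_add : forall A : nat -> Omega -> Prop,
      (forall k, measurable (A k)) ->
      (forall k l w, k <> l -> A k w -> A l w -> False) ->
      infinite_sum (fun k => prob (A k)) (prob (fun w => exists k, A k w))
}.

Definition Rsum_seq (s : seq nat) (f : nat -> R) : R :=
  foldr (fun i acc => f i + acc) 0 s.

Definition Rleb (x y : R) : bool := if Rle_dec x y then true else false.

(* Ordered p-values: the pairs (i, PV_i) sorted (stably) by p-value, so that
   the r-th entry (r = 1..n) is (index of H_(r), PV_(r)). *)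
Definition ordered_pvals (n : nat) (p : nat -> R) : seq (nat * R) :=
  sort (fun a b => Rleb a.2 b.2) [seq (i, p i) | i <- iota 1 n].

Definition PV_ord (n : nat) (p : nat -> R) (r : nat) : R :=
  (nth (0%N, 0) (ordered_pvals n p) r.-1).2.
Definition H_ord (n : nat) (p : nat -> R) (r : nat) : nat :=
  (nth (0%N, 0) (ordered_pvals n p) r.-1).1.

Definition stepup_k (n : nat) (c : nat -> R) (p : nat -> R) : nat :=
  foldr maxn 0%N [seq i <- iota 1 n | Rleb (PV_ord n p i) (c i)].

Definition stepup_rejected (n : nat) (c : nat -> R) (p : nat -> R) : seq nat :=
  [seq H_ord n p r | r <- iota 1 (stepup_k n c p)].

Definition num_R (n : nat) (c : nat -> R) (p : nat -> R) : nat :=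
  size (stepup_rejected n c p).
Definition num_V (n : nat) (I : nat -> bool) (c : nat -> R) (p : nat -> R) : nat :=
  count I (stepup_rejected n c p).

(* FDR(c) = E[ V / max(R,1) ].  V/max(R,1) is a simple random variable with
   values v/r (0 <= v <= n, 1 <= r <= n; the value 0 when R = 0 contributes 0),
   so its expectation is written out as the finite sum of value * probability. *)
Definition FDR (Omega : Type) (P : prob_space Omega) (n : nat) (I : nat -> bool)
    (c : nat -> R) (PV : nat -> Omega -> R) : R :=
  Rsum_seq (iota 1 n) (fun r =>
    Rsum_seq (iota 0 n.+1) (fun v =>
      (INR v / INR r) *
      prob P (fun w => num_R n c (fun i => PV i w) = r /\
                        num_V n I c (fun i => PV i w) = v))).

Definition Gsum (n : nat) (F : nat -> R -> R) (x : R) : R :=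
  Rsum_seq (iota 1 n) (fun i => F i x).

(* Main.v *)
Require Import Defs.
From Stdlib Require Import Reals.
From mathcomp Require Import ssreflect ssrfun ssrbool eqtype ssrnat seq path.
From Stdlib Require Import Classical ClassicalEpsilon FunctionalExtensionality PropExtensionality Lra Lia.
From Stdlib Require Znat.
From mathcomp Require Import zify.

Set Implicit Arguments.
Unset Strict Implicit.
Local Open Scope R_scope.

Section Prob.
Variables (Omega : Type) (P : prob_space Omega).

Lemma pred_ext (A B : Omega -> Prop) : (forall w, A w <-> B w) -> A = B.
Proof. move=> h; apply: functional_extensionality => w; apply: propositional_extensionality; exact: h. Qed.

Lemma meas_ext (A B : Omega -> Prop) : measurable P A -> (forall w, A w <-> B w) -> measurable P B.
Proof. by move=> hA h; rewrite -(pred_ext h). Qed.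

Lemma prob_ext (A B : Omega -> Prop) : (forall w, A w <-> B w) -> prob P A = prob P B.
Proof. by move=> h; rewrite (pred_ext h). Qed.

Lemma meas_empty : measurable P (fun _ => False).
Proof. apply: meas_ext (meas_compl (meas_full P)) _ => w; tauto. Qed.

Lemma meas_not (A : Omega -> Prop) : measurable P A -> measurable P (fun w => ~ A w).
Proof. exact: meas_compl. Qed.

Lemma meas_or (A B : Omega -> Prop) : measurable P A -> measurable P B ->
  measurable P (fun w => A w \/ B w).
Proof.
move=> hA hB.
have h := @meas_union _ P (fun k => if k is 0%N then A else B) (fun k => if k is 0%N then hA else hB).
apply: meas_ext h _ => w; split.
- by case=> [[|k]] h; [left|right].
- by case=> h; [exists 0%N | exists 1%N].
Qed.

Lemma meas_and (A B : Omega -> Prop) : measurable P A -> measurable P B ->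
  measurable P (fun w => A w /\ B w).
Proof.
move=> hA hB; apply: meas_ext (meas_not (meas_or (meas_not hA) (meas_not hB))) _ => w.
split; [move=> h; split; apply: NNPP => h'; apply: h; tauto | tauto].
Qed.

Lemma prob_empty : prob P (fun _ => False) = 0.
Proof.
have h := @prob_sigma_add _ P (fun _ => fun _ => False) (fun _ => meas_empty) (fun _ _ _ _ h _ => h).
rewrite (prob_ext (B := fun _ => False)) in h; last by move=> w; split => // [[]].
set p0 := prob P (fun _ => False) in h *.
have hp0 : 0 <= p0 by apply: prob_nonneg; exact: meas_empty.
case: (Rle_lt_or_eq_dec _ _ hp0) => // hlt.
have [N HN] := h (p0 / 2) ltac:(lra).
have h1 := HN N (Nat.le_refl _).
have h2 := HN (S N) (Nat.le_succ_diag_r _).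
rewrite /R_dist !sum_cte in h1 h2.
rewrite S_INR in h1. rewrite !S_INR in h2.
have hN := pos_INR N.
apply Rabs_def2 in h1; apply Rabs_def2 in h2.
nra.
Qed.

Lemma prob_add (X S : Omega -> Prop) : measurable P X -> measurable P S ->
  prob P X = prob P (fun w => X w /\ S w) + prob P (fun w => X w /\ ~ S w).
Proof.
move=> hX hS.
pose A k : Omega -> Prop := match k with 0%N => (fun w => X w /\ S w)
   | 1%N => (fun w => X w /\ ~ S w) | _ => (fun _ => False) end.
have hA : forall k, measurable P (A k).
  case=> [|[|k]] /=; [exact: meas_and | exact: meas_and (meas_not _) | exact: meas_empty].
have hd : forall k l w, k <> l -> A k w -> A l w -> False.
  by case=> [|[|k]] [|[|l]] w //= _; tauto.
have h := @prob_sigma_add _ P A hA hd.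
rewrite (prob_ext (B := X)) in h; last first.
  move=> w; split; first by case=> [[|[|k]]] /=; tauto.
  move=> hx; case: (classic (S w)) => hs; [exists 0%N | exists 1%N]; by simpl; tauto.
apply: (uniqueness_sum _ _ _ h) => eps heps; exists 1%N => m hm.
have -> : sum_f_R0 (fun k => prob P (A k)) m =
   prob P (fun w => X w /\ S w) + prob P (fun w => X w /\ ~ S w).
  elim: m hm => [|m IH] hm; first by inversion hm.
  case: m IH hm => [|m] IH hm; first by simpl; lra.
  rewrite /= in IH *; rewrite IH; last by apply/Nat.le_succ_l; apply/Nat.lt_0_succ.
  rewrite /= prob_empty; lra.
rewrite /R_dist Rminus_diag Rabs_R0; lra.
Qed.

End Prob.

Definition sumL {T : Type} (h : T -> R) (l : seq T) : R :=
  foldr (fun x acc => h x + acc) 0 l.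

Lemma sumL_cat {T} (h : T -> R) l1 l2 : sumL h (l1 ++ l2) = sumL h l1 + sumL h l2.
Proof. elim: l1 => [|x l IH]; first by rewrite /sumL /=; lra.
rewrite /sumL /= in IH *; rewrite IH; lra. Qed.

Lemma sumL_map {T U} (h : U -> R) (g : T -> U) l : sumL h (map g l) = sumL (fun x => h (g x)) l.
Proof. elim: l => [|x l IH] //. rewrite /sumL /= in IH *; by rewrite IH. Qed.

Lemma sumL_flatten {T} (h : T -> R) ls : sumL h (flatten ls) = sumL (sumL h) ls.
Proof. elim: ls => [|l ls IH] //=; rewrite sumL_cat IH. by []. Qed.

Lemma sumL_ext {T} (h g : T -> R) l : (forall x, h x = g x) -> sumL h l = sumL g l.
Proof. move=> e; elim: l => [|x l IH] //. rewrite /sumL /= in IH *; by rewrite IH e. Qed.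

Lemma eq_in_sumL {T : eqType} (h g : T -> R) l : (forall x, x \in l -> h x = g x) -> sumL h l = sumL g l.
Proof.
elim: l => [|x l IH] // e; rewrite /sumL /= in IH *; rewrite IH ?e ?mem_head //.
by move=> y hy; apply: e; rewrite in_cons hy orbT.
Qed.

Lemma sumL_add {T} (h g : T -> R) l : sumL (fun x => h x + g x) l = sumL h l + sumL g l.
Proof. elim: l => [|x l IH]; first by rewrite /sumL /=; lra.
rewrite /sumL /= in IH *; rewrite IH; lra. Qed.

Lemma sumL_scale {T} (h : T -> R) a l : sumL (fun x => a * h x) l = a * sumL h l.
Proof. elim: l => [|x l IH]; first by rewrite /sumL /=; lra.
rewrite /sumL /= in IH *; rewrite IH; lra. Qed.

Lemma sumL_opp {T} (h : T -> R) l : sumL (fun x => - h x) l = - sumL h l.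
Proof. elim: l => [|x l IH]; first by rewrite /sumL /=; lra.
rewrite /sumL /= in IH *; rewrite IH; lra. Qed.

Lemma memC {T : eqType} (x y : T) l : y \in l -> y \in x :: l.
Proof. by move=> h; rewrite in_cons h orbT. Qed.

Lemma sumL_ge0 {T : eqType} (h : T -> R) l : (forall x, x \in l -> 0 <= h x) -> 0 <= sumL h l.
Proof.
elim: l => [|x l IH] hp; first by rewrite /sumL /=; lra.
rewrite /sumL /= in IH *.
have := hp x (mem_head _ _); have := IH (fun y hy => hp y (memC _ hy)); lra.
Qed.

Lemma sumL_le {T : eqType} (h g : T -> R) l : (forall x, x \in l -> h x <= g x) -> sumL h l <= sumL g l.
Proof.
elim: l => [|x l IH] hp; first by rewrite /sumL /=; lra.
rewrite /sumL /= in IH *.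
have := hp x (mem_head _ _); have := IH (fun y hy => hp y (memC _ hy)); lra.
Qed.

Lemma sumL_filter_le {T : eqType} (h : T -> R) (a : pred T) l :
  (forall x, x \in l -> 0 <= h x) -> sumL h (filter a l) <= sumL h l.
Proof.
elim: l => [|x l IH] hp; first by rewrite /sumL /=; lra.
rewrite /sumL /= in IH *.
have := hp x (mem_head _ _); have := IH (fun y hy => hp y (memC _ hy)).
case: (a x) => /=; lra.
Qed.

Lemma sumL_ge_term {T : eqType} (h : T -> R) l x : (forall y, y \in l -> 0 <= h y) ->
  x \in l -> h x <= sumL h l.
Proof.
elim: l => [|y l IH] // hp; rewrite /sumL /= in IH *.
have h0 := hp y (mem_head _ _); have h1 := sumL_ge0 (fun z hz => hp z (memC _ hz)).
rewrite /sumL in h1.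
rewrite in_cons => /orP [/eqP -> | hx]; first lra.
have := IH (fun z hz => hp z (memC _ hz)) hx; lra.
Qed.

Lemma sumL_delta {T : eqType} (g : T -> R) l k : uniq l ->
  sumL (fun x => if x == k then g x else 0) l = if k \in l then g k else 0.
Proof.
elim: l => [|x l IH] // /andP [hx hu]; rewrite /sumL /= in IH *; rewrite IH // in_cons.
case: (eqVneq x k) => [<-|hne] /=.
  by rewrite (negbTE hx); lra.
by rewrite Rplus_0_l.
Qed.

Lemma sumL_swap {T U} (h : T -> U -> R) l1 l2 :
  sumL (fun x => sumL (fun y => h x y) l2) l1 = sumL (fun y => sumL (fun x => h x y) l1) l2.
Proof.
elim: l1 => [|x l1 IH].
  elim: l2 => [|y l2 IH2] //. rewrite /sumL /= in IH2 *; rewrite -IH2; lra.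
rewrite /sumL /= in IH *; rewrite IH.
have := sumL_add (fun y => h x y) (fun y => sumL (fun x0 => h x0 y) l1) l2.
rewrite /sumL /= => ->; done.
Qed.

Lemma sumL_count {T : eqType} (a : pred T) l x :
  sumL (fun y => if a y then x else 0) l = INR (count a l) * x.
Proof.
elim: l => [|y l IH]; first by rewrite /sumL /=; lra.
rewrite /sumL /= in IH *.
rewrite IH; case: (a y); rewrite ?add1n ?add0n ?S_INR; lra.
Qed.

Section Lin.
Variables (Omega : Type) (P : prob_space Omega).

Definition ind (S : Omega -> Prop) (w : Omega) : R :=
  if excluded_middle_informative (S w) then 1 else 0.
Definition Elist (A : Omega -> Prop) (l : seq (R * (Omega -> Prop))) : R :=
  sumL (fun aS => aS.1 * prob P (fun w => A w /\ aS.2 w)) l.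
Definition Vlist (l : seq (R * (Omega -> Prop))) (w : Omega) : R :=
  sumL (fun aS => aS.1 * ind aS.2 w) l.
Definition allm (l : seq (R * (Omega -> Prop))) : Prop :=
  foldr (fun x acc => measurable P x.2 /\ acc) True l.

Lemma allm_cat l1 l2 : allm l1 -> allm l2 -> allm (l1 ++ l2).
Proof. by elim: l1 => [|x l IH] //= [h1 h2] h3; split => //; apply: IH. Qed.

Lemma allm_map {T : eqType} (f : T -> R * (Omega -> Prop)) s :
  (forall x, x \in s -> measurable P (f x).2) -> allm (map f s).
Proof.
elim: s => [|x s IH] //= h; split; first by apply: h; rewrite mem_head.
by apply: IH => y hy; apply: h; rewrite in_cons hy orbT.
Qed.

Lemma allm_flatten_map {T : eqType} (f : T -> seq (R * (Omega -> Prop))) s :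
  (forall x, x \in s -> allm (f x)) -> allm (flatten (map f s)).
Proof.
elim: s => [|x s IH] //= h; apply: allm_cat; first by apply: h; rewrite mem_head.
by apply: IH => y hy; apply: h; rewrite in_cons hy orbT.
Qed.



Lemma ind1 (S : Omega -> Prop) w : S w -> ind S w = 1.
Proof. by rewrite /ind; case: excluded_middle_informative. Qed.
Lemma ind0 (S : Omega -> Prop) w : ~ S w -> ind S w = 0.
Proof. by rewrite /ind; case: excluded_middle_informative. Qed.
Lemma ind_ge0 S w : 0 <= ind S w.
Proof. rewrite /ind; destruct (excluded_middle_informative (S w)); simpl; lra. Qed.

Lemma ind_iff (S : Omega -> Prop) w (b : bool) : (S w <-> b) -> ind S w = if b then 1 else 0.
Proof.
move=> h; case: b h => h; first by apply: ind1; apply/h.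
by apply: ind0 => /h.
Qed.

Lemma Elist_split A S l : measurable P A -> measurable P S -> allm l ->
  Elist A l = Elist (fun w => A w /\ S w) l + Elist (fun w => A w /\ ~ S w) l.
Proof.
move=> hA hS; elim: l => [|[a T] l IH] /= ; first by rewrite /Elist /sumL /=; lra.
move=> [hT hl]; move: (IH hl); rewrite /Elist /sumL /= => ->.
rewrite (prob_add (meas_and hA hT) hS).
rewrite (prob_ext P (A := fun w => (A w /\ T w) /\ S w) (B := fun w => (A w /\ S w) /\ T w)); last by move=> w; tauto.
rewrite (prob_ext P (A := fun w => (A w /\ T w) /\ ~ S w) (B := fun w => (A w /\ ~ S w) /\ T w)); last by move=> w; tauto.
lra.
Qed.

Lemma pos_lin l : allm l -> forall c A, measurable P A ->
  (forall w, A w -> 0 <= c + Vlist l w) -> 0 <= c * prob P A + Elist A l.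
Proof.
elim: l => [|[a S] l IH] /=.
  move=> _ c A hA hw; rewrite /Elist /sumL /= Rplus_0_r.
  case: (classic (exists w, A w)) => [[w Aw]|hno].
    have := hw w Aw; rewrite /Vlist /sumL /= Rplus_0_r => hc.
    apply: Rmult_le_pos => //; exact: prob_nonneg.
  rewrite (prob_ext P (B := fun _ => False)); last by move=> w; split => // h; apply: hno; exists w.
  rewrite prob_empty; lra.
move=> [hS hl] c A hA hw.
have hAS := meas_and hA hS; have hAnS := meas_and hA (meas_not hS).
have h1 := IH hl (c + a) _ hAS.
have h2 := IH hl c _ hAnS.
have e1 := Elist_split hA hS hl.
rewrite /Elist /sumL /= -/(sumL _ _) -/(Elist A l) e1 (prob_add hA hS).
have : 0 <= (c + a) * prob P (fun w => A w /\ S w) + Elist (fun w => A w /\ S w) l.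
  apply: h1 => w [Aw Sw]; have := hw w Aw; rewrite /Vlist /sumL /= (ind1 Sw); lra.
have : 0 <= c * prob P (fun w => A w /\ ~ S w) + Elist (fun w => A w /\ ~ S w) l.
  apply: h2 => w [Aw Sw]; have := hw w Aw; rewrite /Vlist /sumL /= (ind0 Sw); lra.
lra.
Qed.

Lemma Elist_cat A l1 l2 : Elist A (l1 ++ l2) = Elist A l1 + Elist A l2.
Proof. exact: sumL_cat. Qed.
Lemma Vlist_cat l1 l2 w : Vlist (l1 ++ l2) w = Vlist l1 w + Vlist l2 w.
Proof. exact: sumL_cat. Qed.

End Lin.

Lemma RlebP (a b : R) : reflect (a <= b) (Rleb a b).
Proof. rewrite /Rleb; case: Rle_dec => h; constructor => //. Qed.

Definition relp (p : nat -> R) : rel nat := fun i j => Rleb (p i) (p j).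
Definition srt (n : nat) (p : nat -> R) := sort (relp p) (iota 1 n).

Lemma relp_total p : total (relp p).
Proof. move=> x y; rewrite /relp; case: (RlebP (p x) (p y)) => //= h; apply/RlebP; lra. Qed.
Lemma relp_tr p : transitive (relp p).
Proof. move=> y x z /RlebP h1 /RlebP h2; apply/RlebP; lra. Qed.
Lemma relp_refl p : reflexive (relp p).
Proof. move=> x; apply/RlebP; lra. Qed.

Lemma foldr_maxn_le (l : seq nat) m : (forall x, x \in l -> x <= m)%N -> (foldr maxn 0%N l <= m)%N.
Proof.
elim: l => [|x l IH] //= h; rewrite geq_max h ?mem_head //= IH // => y hy.
by apply: h; rewrite in_cons hy orbT.
Qed.

Lemma foldr_maxn_mem (l : seq nat) : foldr maxn 0%N l = 0%N \/ foldr maxn 0%N l \in l.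
Proof.
elim: l => [|x l IH]; first by left.
have -> : foldr maxn 0%N (x::l) = maxn x (foldr maxn 0%N l) by [].
right; case: (leqP x (foldr maxn 0%N l)) => h.
  case: IH => [e|hm]; last by rewrite in_cons hm orbT.
  by move: h; rewrite e leqn0 => /eqP ->; rewrite mem_head.
by rewrite mem_head.
Qed.

Lemma take_nthE (s : seq nat) k : (k <= size s)%N -> take k s = map (nth 0%N s) (iota 0 k).
Proof.
move=> hk; apply: (@eq_from_nth _ 0%N); first by rewrite size_map size_iota size_takel.
move=> i; rewrite size_takel // => hi.
by rewrite nth_take // (nth_map 0%N) ?size_iota // nth_iota.
Qed.

Section Step.
Variables (n : nat) (c : nat -> R) (p : nat -> R).

Lemma ord_pvalsE : ordered_pvals n p = map (fun i => (i, p i)) (srt n p).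
Proof. by rewrite /ordered_pvals sort_map. Qed.

Lemma size_srt : size (srt n p) = n.
Proof. by rewrite size_sort size_iota. Qed.
Lemma mem_srt x : (x \in srt n p) = (x \in iota 1 n).
Proof. exact: mem_sort. Qed.
Lemma uniq_srt : uniq (srt n p).
Proof. by rewrite sort_uniq iota_uniq. Qed.
Lemma sorted_srt : sorted (relp p) (srt n p).
Proof. exact: sort_sorted (relp_total p) _. Qed.

Lemma H_ordE r : (0 < r <= n)%N -> H_ord n p r = nth 0%N (srt n p) r.-1.
Proof.
move=> /andP [h1 h2]; rewrite /H_ord ord_pvalsE (nth_map 0%N) // size_srt.
by case: r h1 h2.
Qed.
Lemma PV_ordE r : (0 < r <= n)%N -> PV_ord n p r = p (nth 0%N (srt n p) r.-1).
Proof.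
move=> /andP [h1 h2]; rewrite /PV_ord ord_pvalsE (nth_map 0%N) // size_srt.
by case: r h1 h2.
Qed.

Lemma k_le : (stepup_k n c p <= n)%N.
Proof.
apply: foldr_maxn_le => x; rewrite mem_filter mem_iota => /andP [_ /andP [_ h]].
by rewrite add1n ltnS in h.
Qed.

Lemma k_mem : (0 < stepup_k n c p)%N -> PV_ord n p (stepup_k n c p) <= c (stepup_k n c p).
Proof.
rewrite /stepup_k; case: (foldr_maxn_mem [seq i <- iota 1 n | Rleb (PV_ord n p i) (c i)]) => [->//|].
by rewrite mem_filter => /andP [/RlebP h _].
Qed.

Lemma rejE : stepup_rejected n c p = take (stepup_k n c p) (srt n p).
Proof.
have hk := k_le; rewrite take_nthE ?size_srt // /stepup_rejected.
rewrite -[iota 1 _](@map_id nat) -[in RHS](@map_id nat (iota 0 _)).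
have -> : iota 1 (stepup_k n c p) = map S (iota 0 (stepup_k n c p)).
  by rewrite -(iotaDl 1).
rewrite !map_id -map_comp; apply/eq_in_map => i; rewrite mem_iota add0n => /andP [_ hi] /=.
by rewrite H_ordE //= (leq_trans hi hk).
Qed.

Lemma rej_le j : j \in stepup_rejected n c p -> p j <= c (stepup_k n c p).
Proof.
rewrite rejE => hj.
set k := stepup_k n c p in hj *.
have hk : (k <= n)%N := k_le.
have hi : (index j (take k (srt n p)) < k)%N.
  by rewrite -{2}(size_takel (s := srt n p) (n0 := k)) ?size_srt // index_mem.
have e := nth_index 0%N hj; rewrite nth_take // in e.
have k0 : (0 < k)%N := leq_ltn_trans (leq0n _) hi.
have := k_mem k0; rewrite PV_ordE ?k0 // => hc.
have : relp p (nth 0%N (srt n p) (index j (take k (srt n p)))) (nth 0%N (srt n p) k.-1).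
  apply: (sorted_leq_nth (@relp_tr p) (@relp_refl p) 0%N sorted_srt (index j (take k (srt n p))) k.-1); rewrite ?inE ?size_srt.
  - exact: leq_trans hi hk.
  - clear -hk k0; lia.
  - clear -hi k0; lia.
rewrite e => /RlebP h; rewrite /k in h *; lra.
Qed.

Lemma rej_uniq : uniq (stepup_rejected n c p).
Proof. by rewrite rejE take_uniq // uniq_srt. Qed.
Lemma rej_mem j : j \in stepup_rejected n c p -> j \in iota 1 n.
Proof. by rewrite rejE => /mem_take; rewrite mem_srt. Qed.
Lemma rej_size : size (stepup_rejected n c p) = stepup_k n c p.
Proof. by rewrite rejE size_takel // size_srt k_le. Qed.

End Step.

Lemma srt_cong n p1 p2 : (forall i j, i \in iota 1 n -> j \in iota 1 n -> relp p1 i j = relp p2 i j) ->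
  srt n p1 = srt n p2.
Proof.
case: n => [|n] h; first by [].
pose cl i := if i \in iota 1 n.+1 then i else 1%N.
have hcl : map cl (iota 1 n.+1) = iota 1 n.+1.
  rewrite -[RHS]map_id; apply/eq_in_map => i hi; by rewrite /cl hi.
have hin : forall i, cl i \in iota 1 n.+1.
  move=> i; rewrite /cl; case: ifP => // _; rewrite mem_iota; lia.
rewrite /srt -hcl !sort_map; congr (map cl (sort _ _)).
apply: functional_extensionality => x; apply: functional_extensionality => y.
rewrite /relpre; apply: h; apply: hin.
Qed.

Lemma rej_cong n c p1 p2 :
  (forall i j, i \in iota 1 n -> j \in iota 1 n -> relp p1 i j = relp p2 i j) ->
  (forall i r, i \in iota 1 n -> r \in iota 1 n -> Rleb (p1 i) (c r) = Rleb (p2 i) (c r)) ->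
  stepup_rejected n c p1 = stepup_rejected n c p2.
Proof.
move=> h1 h2; rewrite !rejE.
have -> : stepup_k n c p1 = stepup_k n c p2.
  rewrite /stepup_k; congr foldr; apply: eq_in_filter => i hi.
  have hr : (0 < i <= n)%N by move: hi; rewrite mem_iota; lia.
  rewrite !PV_ordE // -(srt_cong h1); apply: h2 => //.
  rewrite -(@mem_srt n p1) mem_nth // size_srt; lia.
by rewrite (srt_cong h1).
Qed.

Section Meas.
Variables (Omega : Type) (P : prob_space Omega).

Lemma meas_bvec (X : eqType) (e : X -> Omega -> bool) (s : seq X) (Q : seq bool -> Prop) :
  (forall x, x \in s -> measurable P (fun w => e x w)) ->
  measurable P (fun w => Q (map (fun x => e x w) s)).
Proof.
elim: s Q => [|x s IH] Q h /=.
  case: (classic (Q [::])) => hq.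
    by apply: meas_ext (meas_full P) _ => w; split.
  by apply: meas_ext (meas_empty P) _ => w; split.
have hx := h x (mem_head _ _).
have hr : forall y, y \in s -> measurable P (fun w => e y w) by move=> y hy; apply: h; rewrite in_cons hy orbT.
have ht := IH (fun l => Q (true :: l)) hr.
have hf := IH (fun l => Q (false :: l)) hr.
apply: meas_ext (meas_or (meas_and hx ht) (meas_and (meas_not hx) hf)) _ => w.
case: (e x w) => /=; split.
- by case=> [[_ ?]|[? _]].
- by move=> ?; left.
- by case=> [[? _]|[_ ?]].
- by move=> ?; right.
Qed.

Lemma meas_le2 (X Y : Omega -> R) : (forall x, measurable P (fun w => X w <= x)) ->
  (forall x, measurable P (fun w => Y w <= x)) -> (forall w, 0 <= Y w) ->
  measurable P (fun w => X w <= Y w).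
Proof.
move=> hX hY hY0.
pose q (m k : nat) := INR k / INR m.
have hU : measurable P (fun w => exists m, exists k, Y w <= q m k /\ ~ X w <= q m k).
  apply: (@meas_union _ P (fun m w => exists k, Y w <= q m k /\ ~ X w <= q m k)) => m.
  apply: (@meas_union _ P (fun k w => Y w <= q m k /\ ~ X w <= q m k)) => k.
  exact: meas_and (hY _) (meas_not (hX _)).
apply: meas_ext (meas_not hU) _ => w; split.
- move=> h; apply: NNPP => hlt; apply: h.
  have hd : 0 < X w - Y w by lra.
  have [N [hN1 hN2]] := archimed_cor1 _ hd.
  have hN : 0 < INR N by apply: lt_0_INR.
  have hinv : INR N * / INR N = 1 by field; lra.
  have [hz1 hz2] := archimed (Y w * INR N).
  set z := up (Y w * INR N) in hz1 hz2.
  have hy0 := hY0 w.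
  have hzpos : (0 <= z)%Z.
    apply: le_IZR; have : 0 <= Y w * INR N by nra. lra.
  exists N, (Z.to_nat z); rewrite /q INR_IZR_INZ Znat.Z2Nat.id //.
  have hl : Y w <= IZR z / INR N.
    rewrite /Rdiv; have : Y w * INR N * / INR N <= IZR z * / INR N.
      apply: Rmult_le_compat_r; [apply: Rlt_le; apply: Rinv_0_lt_compat => //| lra].
    by rewrite Rmult_assoc hinv Rmult_1_r.
  split => // hc.
  have e : IZR z / INR N * INR N = IZR z by field; lra.
  have h1 : X w * INR N <= IZR z by rewrite -e; apply: Rmult_le_compat_r; lra.
  have h2 : 1 < (X w - Y w) * INR N.
    have := Rmult_lt_compat_r (INR N) _ _ hN hN1; rewrite Rinv_l; lra.
  nra.
- move=> h [m [k [h1 h2]]]; lra.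
Qed.

End Meas.

Section MeasRej.
Variables (Omega : Type) (P : prob_space Omega) (n : nat) (c : nat -> R) (PV : nat -> Omega -> R).
Hypothesis HPV01 : forall i w, (1 <= i <= n)%N -> 0 <= PV i w <= 1.
Hypothesis HPVmeas : forall i x, (1 <= i <= n)%N -> measurable P (fun w => PV i w <= x).

Lemma meas_rejQ (Q : seq nat -> Prop) :
  measurable P (fun w => Q (stepup_rejected n c (fun i => PV i w))).
Proof.
pose s := [seq (b, ij) | b <- [:: false; true], ij <- [seq (i, j) | i <- iota 1 n, j <- iota 1 n]].
pose e (x : bool * (nat * nat)) w :=
  if x.1 then Rleb (PV x.2.1 w) (c x.2.2) else Rleb (PV x.2.1 w) (PV x.2.2 w).
pose bv w := map (fun x => e x w) s.
have hin : forall b i j, i \in iota 1 n -> j \in iota 1 n -> (b, (i, j)) \in s.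
  move=> b i j hi hj; apply/allpairsPdep; exists b, (i, j); split => //.
    by case: b.
  by apply/allpairsPdep; exists i, j.
have hm : forall x, x \in s -> measurable P (fun w => e x w).
  move=> x /allpairsPdep [b [ij [_ /allpairsPdep [i [j [hi hj ->]]] ->]]].
  have hi' : (1 <= i <= n)%N by move: hi; rewrite mem_iota; lia.
  have hj' : (1 <= j <= n)%N by move: hj; rewrite mem_iota; lia.
  rewrite /e /=; case: b.
    by apply: meas_ext (HPVmeas (c j) hi') _ => w; split => /RlebP.
  apply: meas_ext (meas_le2 (fun x => HPVmeas x hi') (fun x => HPVmeas x hj') (fun w => proj1 (HPV01 w hj'))) _.
  by move=> w; split => /RlebP.
have hb := meas_bvec (fun bs => exists w', bv w' = bs /\ Q (stepup_rejected n c (fun i => PV i w'))) hm.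
apply: meas_ext hb _ => w; split.
- move=> [w' [hbv hq]]; rewrite -(rej_cong (p1 := fun i => PV i w')) //.
  + move=> i j hi hj; have /eq_in_map h := hbv.
    exact: (h (false, (i, j)) (hin false i j hi hj)).
  + move=> i r hi hr; have /eq_in_map h := hbv.
    exact: (h (true, (i, r)) (hin true i r hi hr)).
- by move=> hq; exists w.
Qed.

End MeasRej.

Lemma count_sub (I : nat -> bool) (r s : seq nat) : uniq r -> uniq s -> (forall x, x \in r -> x \in s) ->
  count I r = count (fun j => j \in r) (filter I s).
Proof.
move=> ur us hrs; rewrite -!size_filter; apply: perm_size; apply: uniq_perm.
- exact: filter_uniq.
- by apply: filter_uniq; apply: filter_uniq.
move=> x; rewrite !mem_filter; case hx: (x \in r); rewrite ?andbF ?andbT //=.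
by rewrite (hrs _ hx) andbT.
Qed.

Lemma Rsum_seqE (s : seq nat) f : Rsum_seq s f = sumL f s.
Proof. by []. Qed.

Theorem proposition1
  (Omega : Type) (P : prob_space Omega) (n : nat)
  (PV : nat -> Omega -> R) (I : nat -> bool) (F : nat -> R -> R) (c : nat -> R)
  (* p-values in [0,1], measurable, with arbitrary joint dependence *)
  (HPV01 : forall i w, (1 <= i <= n)%N -> 0 <= PV i w <= 1)
  (HPVmeas : forall i x, (1 <= i <= n)%N -> measurable P (fun w => PV i w <= x))
  (* each F_i is a distribution function on [0,1] *)
  (HFmono : forall i x y, (1 <= i <= n)%N -> 0 <= x -> x <= y -> y <= 1 ->
             F i x <= F i y)
  (HFrange : forall i x, (1 <= i <= n)%N -> 0 <= x <= 1 -> 0 <= F i x <= 1)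
  (* F_j is the distribution of PV_j for true nulls j in I *)
  (HFnull : forall j x, (1 <= j <= n)%N -> I j -> 0 <= x <= 1 ->
             prob P (fun w => PV j w <= x) = F j x)
  (* F_i(u) <= u on (0,1) *)
  (HFsub : forall i u, (1 <= i <= n)%N -> 0 < u < 1 -> F i u <= u)
  (* critical values 0 = c_0 <= c_1 <= ... <= c_n <= 1 *)
  (Hc0 : c 0%N = 0)
  (Hcmono : forall r, (1 <= r <= n)%N -> c r.-1 <= c r)
  (Hc1 : forall r, (1 <= r <= n)%N -> c r <= 1) :
  let B1 := Rsum_seq (iota 1 n) (fun r =>
              Rsum_seq [seq j <- iota 1 n | I j] (fun j =>
                / INR r * (F j (c r) - F j (c r.-1)))) in
  let B2 := Rsum_seq (iota 1 n) (fun r =>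
              / INR r * (Gsum n F (c r) - Gsum n F (c r.-1))) in
  FDR P n I c PV <= B1 /\ B1 <= B2.
Proof.
move=> B1 B2.
have hc0 : forall r, (r <= n)%N -> 0 <= c r.
  elim=> [|r IH] h; first by rewrite Hc0; lra.
  have h1 : (1 <= r.+1 <= n)%N by rewrite h.
  have := Hcmono _ h1; have := IH (ltnW h); simpl; lra.
have hcr : forall r, r \in iota 1 n -> 0 <= c r <= 1 /\ 0 <= c r.-1 <= 1.
  move=> r; rewrite mem_iota => hr.
  have hr' : (1 <= r <= n)%N by lia.
  have := Hc1 _ hr'; have := hc0 r ltac:(lia); have := hc0 r.-1 ltac:(lia); have := Hcmono _ hr'; lra.
have hINR : forall r, r \in iota 1 n -> 0 < INR r.
  move=> r; rewrite mem_iota => hr; apply: lt_0_INR; apply/ltP; lia.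
have hrng : forall j, j \in iota 1 n -> (1 <= j <= n)%N.
  by move=> j; rewrite mem_iota; lia.
have hF0 : forall j, (1 <= j <= n)%N -> F j 0 = 0.
  move=> j hj; have := HFrange j 0 hj ltac:(lra) => [[h0 h1]].
  case: (Rle_lt_or_eq_dec _ _ h0) => // hlt.
  have := HFmono j 0 (F j 0 / 2) hj ltac:(lra) ltac:(lra) ltac:(lra).
  have := HFsub j (F j 0 / 2) hj ltac:(lra); lra.
set Iset := [seq j <- iota 1 n | I j].
have hIset : forall j, j \in Iset -> I j /\ (1 <= j <= n)%N.
  by move=> j; rewrite mem_filter => /andP [hI hj]; split => //; apply: hrng.
split; last first.
  rewrite /B1 /B2 !Rsum_seqE; apply: sumL_le => r hr.
  rewrite /Gsum !Rsum_seqE /Rminus -sumL_opp -sumL_add -sumL_scale.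
  apply: sumL_filter_le => j hj.
  have := hcr r hr; have := hINR r hr => h1 [h2 h3].
  apply: Rmult_le_pos; first by apply: Rlt_le; apply: Rinv_0_lt_compat.
  have := HFmono j (c r.-1) (c r) (hrng j hj) ltac:(lra) (Hcmono r (hrng r hr)) ltac:(lra); lra.
pose E r v := fun w => num_R n c (fun i => PV i w) = r /\ num_V n I c (fun i => PV i w) = v.
pose C j r := fun w => PV j w <= c r /\ ~ PV j w <= c r.-1.
pose D j := fun w => PV j w <= 0.
pose l1 := flatten (map (fun r => map (fun j => (/ INR r, C j r)) Iset) (iota 1 n))
           ++ map (fun j => (1, D j)) Iset.
pose l2 := flatten (map (fun r => map (fun v => (- (INR v / INR r), E r v)) (iota 0 n.+1)) (iota 1 n)).
have hmE : forall r v, measurable P (E r v).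
  move=> r v; apply: meas_ext (meas_rejQ c HPV01 HPVmeas (fun l => size l = r /\ count I l = v)) _.
  by move=> w; split.
have hm : allm P (l1 ++ l2).
  apply: allm_cat; first apply: allm_cat.
  - apply: allm_flatten_map => r hr; apply: allm_map => j hj /=.
    have hj' := proj2 (hIset j hj).
    exact: (meas_and (HPVmeas j (c r) hj') (meas_not (HPVmeas j (c r.-1) hj'))).
  - by apply: allm_map => j hj /=; apply: (HPVmeas j 0); case: (hIset j hj).
  - by apply: allm_flatten_map => r hr; apply: allm_map => v hv /=.
have hpt : forall w, True -> 0 <= 0 + Vlist (l1 ++ l2) w.
  move=> w _; rewrite Rplus_0_l Vlist_cat /l1 Vlist_cat.
  set rej := stepup_rejected n c (fun i => PV i w).
  have hRn : (size rej <= n)%N by rewrite /rej rej_size k_le.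
  have hVR : (count I rej <= size rej)%N by apply: count_size.
  have e2 : Vlist l2 w = - (if (0 < size rej)%N then INR (count I rej) / INR (size rej) else 0).
    rewrite /Vlist /l2 sumL_flatten sumL_map.
    rewrite (sumL_ext (g := fun r => - (if r == size rej then INR (count I rej) / INR r else 0))); last first.
      move=> r; rewrite sumL_map.
      rewrite (sumL_ext (g := fun v => - (if v == count I rej then (if r == size rej then INR v / INR r else 0) else 0))).
        rewrite sumL_opp sumL_delta ?iota_uniq // mem_iota.
        have -> : (0 <= count I rej < 0 + n.+1)%N by apply/andP; split => //; rewrite add0n ltnS (leq_trans hVR hRn).
        by [].
      move=> v /=.
      rewrite (ind_iff (b := (r == size rej) && (v == count I rej))); last first.
        rewrite /E /num_R /num_V -/rej; split.
          by case=> -> ->; rewrite !eqxx.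
        by case/andP => /eqP -> /eqP ->.
      case: (r == size rej); case: (v == count I rej) => /=; ring.
    rewrite sumL_opp sumL_delta ?iota_uniq // mem_iota.
    by case: (size rej) hRn => [|k] hk //=; rewrite add1n ltnS hk.
  rewrite e2.
  have e1 : Vlist (flatten [seq [seq (/ INR r, C j r) | j <- Iset] | r <- iota 1 n]) w +
            Vlist [seq (1, D j) | j <- Iset] w =
            sumL (fun j => sumL (fun r => / INR r * ind (C j r) w) (iota 1 n) + 1 * ind (D j) w) Iset.
    rewrite sumL_add /Vlist sumL_flatten !sumL_map.
    rewrite (sumL_ext (g := fun r => sumL (fun j => / INR r * ind (C j r) w) Iset)); last by move=> r; rewrite sumL_map.
    by rewrite sumL_swap.
  rewrite e1.
  have hs0 : forall j, 0 <= sumL (fun r => / INR r * ind (C j r) w) (iota 1 n).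
    move=> j; apply: sumL_ge0 => r hr; apply: Rmult_le_pos; last exact: ind_ge0.
    by apply: Rlt_le; apply: Rinv_0_lt_compat; apply: hINR.
  case: ifP => hR.
  - have hV : count I rej = count (fun j => j \in rej) Iset.
      apply: count_sub; [exact: rej_uniq | exact: iota_uniq | move=> x hx; exact: rej_mem hx].
    rewrite /Rdiv hV -sumL_count.
    suff : sumL (fun y => if y \in rej then / INR (size rej) else 0) Iset <=
      sumL (fun j => sumL (fun r => / INR r * ind (C j r) w) (iota 1 n) + 1 * ind (D j) w) Iset by lra.
    apply: sumL_le => j hj.
    have hD0 := ind_ge0 (D j) w; have := hs0 j.
    case: ifP => hjr; last by lra.
    have hRr : 1 <= INR (size rej) by have := le_INR 1 (size rej) (elimT leP hR).
    have hle := rej_le hjr; rewrite -rej_size -/rej in hle.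
    case: (Rle_dec (PV j w) 0) => hp0.
      rewrite (ind1 (S := D j) hp0).
      have : / INR (size rej) <= 1 by rewrite -Rinv_1; apply: Rinv_le_contravar; lra.
      lra.
    have hex : exists r, Rleb (PV j w) (c r) by exists (size rej); apply/RlebP.
    case: (ex_minnP hex) => r0 /RlebP hr0 hmin.
    have hr0R : (r0 <= size rej)%N by apply: hmin; apply/RlebP.
    have hr0p : (0 < r0)%N.
      by case: r0 hr0 {hmin hr0R} => // h; rewrite Hc0 in h; lra.
    have hr0c : ~ PV j w <= c r0.-1.
      move=> h; have := hmin r0.-1 (introT (RlebP _ _) h).
      move=> hh; clear -hh hr0p; lia.
    have hr0i : r0 \in iota 1 n by rewrite mem_iota add1n ltnS hr0p (leq_trans hr0R hRn).
    have hterm := sumL_ge_term (h := fun r => / INR r * ind (C j r) w)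
      (fun r hr => Rmult_le_pos _ _ (Rlt_le _ _ (Rinv_0_lt_compat _ (hINR r hr))) (ind_ge0 _ _)) hr0i.
    rewrite /= (ind1 (S := C j r0)) in hterm; last by split.
    have : / INR (size rej) <= / INR r0.
      apply: Rinv_le_contravar; first exact: hINR.
      by apply: le_INR; apply/leP.
    lra.
  - have : 0 <= sumL (fun j => sumL (fun r => / INR r * ind (C j r) w) (iota 1 n) + 1 * ind (D j) w) Iset.
      by apply: sumL_ge0 => j _; have := hs0 j; have := ind_ge0 (D j) w; lra.
    lra.
have hpos := pos_lin hm (meas_full P) hpt.
rewrite Elist_cat in hpos.
have e1 : Elist P (fun _ => True) l1 = B1.
  rewrite /l1 Elist_cat.
  have -> : Elist P (fun _ => True) (map (fun j => (1, D j)) Iset) = 0.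
    rewrite /Elist sumL_map (eq_in_sumL (g := fun _ => 0 * 0)); first by rewrite sumL_scale; ring.
    move=> j hj /=; have [hI hj'] := hIset j hj.
    rewrite (prob_ext P (B := fun w => PV j w <= 0)); last by move=> w; split => [[]|].
    rewrite HFnull // ?hF0 //; lra.
  rewrite Rplus_0_r /B1 /Elist sumL_flatten sumL_map Rsum_seqE; apply: eq_in_sumL => r hr.
  rewrite sumL_map Rsum_seqE; apply: eq_in_sumL => j hj /=.
  have [hI hj'] := hIset j hj; have [h1 h2] := hcr r hr.
  have hX := HPVmeas j (c r) hj'; have hS := HPVmeas j (c r.-1) hj'.
  have := prob_add hX hS.
  rewrite (prob_ext P (A := fun w => PV j w <= c r /\ PV j w <= c r.-1) (B := fun w => PV j w <= c r.-1)); last first.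
    move=> w; have := Hcmono r (hrng r hr); split; [case=> // | move=> ?; split => //; lra].
  rewrite (prob_ext P (A := fun w => True /\ C j r w) (B := fun w => PV j w <= c r /\ ~ PV j w <= c r.-1)); last first.
    by move=> w; split => [[]|].
  rewrite !HFnull // => h; f_equal; lra.
have e2 : Elist P (fun _ => True) l2 = - FDR P n I c PV.
  rewrite /Elist /l2 sumL_flatten sumL_map /FDR Rsum_seqE -sumL_opp; apply: sumL_ext => r.
  rewrite sumL_map Rsum_seqE -sumL_opp; apply: sumL_ext => v /=.
  rewrite (prob_ext P (B := E r v)); first by rewrite /E; ring.
  by move=> w; split => [[]|].
lra.
Qed.
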